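(* Let $\mathcal{G}=(V,E,\lambda)$ be a happy temporal graph whose footprint $(V,E)$ is a complete graph. Then $\mathcal{G}$ is bidirectionally temporally connected, but for every edge $e\in E$, the temporal graph obtained from $\mathcal{G}$ by removing $e$ is not bidirectionally temporally connected.
   Context: A temporal graph is $\mathcal{G}=(V,E,\lambda)$ with $V$ finite, $E$ undirected edges, $\lambda:E\to 2^{\mathbb{N}}$ the time labels; $(V,E)$ is the footprint. It is simple if every edge has exactly one label, proper if no two adjacent edges share a label, and happy if both simple and proper. A temporal path is a sequence of pairs $(e_i,t_i)$, $t_i\in\lambda(e_i)$, with $\langle e_i\rangle$ a path in the footprint and $\langle t_i\rangle$ non-decreasing (non-strict) or increasing (strict); in proper graphs the two notions coincide. A bi-path between $u$ and $v$ is a pair $(p_1,p_2)$ with $p_1$ a temporal path from $u$ to $v$ and $p_2$ a temporal path from $v$ to $u$ along the same underlying path reversed. $\mathcal{G}$ is bidirectionally temporally connected if every pair of distinct vertices is joined by a bi-path. *)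

(* Defs.v *)
From mathcomp Require Import all_boot.
Set Implicit Arguments. Unset Strict Implicit. Unset Printing Implicit Defensive.

(* A temporal graph on a finite vertex type V is given by
   - its footprint edge relation E : rel V (undirected: symmetric, irreflexive),
   - its labelling lam : V -> V -> nat -> Prop, where lam x y is the set of
     time labels of the undirected edge {x,y} (so lam x y = lam y x). *)

Definition undirected (V : finType) (E : rel V) (lam : V -> V -> nat -> Prop) :=
  (forall x y, E x y = E y x) /\ (forall x, ~~ E x x) /\
  (forall x y t, lam x y t <-> lam y x t).

Definition complete_footprint (V : finType) (E : rel V) :=
  forall x y, E x y = (x != y).

Definition simple_tg (V : finType) (E : rel V) (lam : V -> V -> nat -> Prop) :=
  forall x y, E x y -> exists t, lam x y t /\ forall t', lam x y t' -> t' = t.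

Definition proper_tg (V : finType) (E : rel V) (lam : V -> V -> nat -> Prop) :=
  forall x y z t, E x y -> E y z -> x != z -> lam x y t -> lam y z t -> False.

Definition happy (V : finType) (E : rel V) (lam : V -> V -> nat -> Prop) :=
  simple_tg E lam /\ proper_tg E lam.

Definition temporal_path (V : finType) (E : rel V) (lam : V -> V -> nat -> Prop)
    (strict : bool) (p : seq V) (ts : seq nat) : Prop :=
  match p with
  | [::] => False
  | x :: q =>
      [/\ path E x q, uniq p, size ts = size q,
          (forall i, i < size q -> lam (nth x p i) (nth x p i.+1) (nth 0 ts i))
        & sorted (if strict then (ltn : rel nat) else (leq : rel nat)) ts]
  end.

Definition bipath (V : finType) (E : rel V) (lam : V -> V -> nat -> Prop)
    (strict : bool) (u v : V) : Prop :=
  exists (p : seq V) (ts1 ts2 : seq nat),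
    [/\ head v p = u, last u p = v,
        temporal_path E lam strict p ts1 & temporal_path E lam strict (rev p) ts2].

Definition bidir_connected (V : finType) (E : rel V) (lam : V -> V -> nat -> Prop)
    (strict : bool) : Prop :=
  forall u v : V, u != v -> bipath E lam strict u v.

(* footprint with the undirected edge {a,b} removed (labels unchanged; labels
   of non-edges are never used) *)
Definition remove_edge (V : finType) (E : rel V) (a b : V) : rel V :=
  fun x y => E x y && ~~ (((x == a) && (y == b)) || ((x == b) && (y == a))).

(* Main.v *)
Require Import Defs.
From mathcomp Require Import all_boot.
From mathcomp Require Import zify.

Lemma sorted_le (strict : bool) (ts : seq nat) i j :
  sorted (if strict then (ltn : rel nat) else (leq : rel nat)) ts ->
  i <= j -> j < size ts -> nth 0 ts i <= nth 0 ts j.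
Proof.
move=> Hs Hij Hj.
have Hs' : sorted leq ts.
  case: strict Hs => // Hs; by apply: sub_sorted Hs => x y /ltnW.
apply: (sorted_leq_nth leq_trans leqnn 0 Hs') => //.
  by rewrite inE (leq_ltn_trans Hij Hj).
Qed.

Theorem lemma4 (V : finType) (E : rel V) (lam : V -> V -> nat -> Prop)
    (strict : bool) :
  undirected E lam -> happy E lam -> complete_footprint E ->
  bidir_connected E lam strict /\
  (forall a b : V, E a b -> ~ bidir_connected (remove_edge E a b) lam strict).
Proof.
move=> [Esym [Eirr Lsym]] [Hsim Hprop] Hcomp.
split.
  move=> u v Huv.
  have Euv : E u v by rewrite Hcomp.
  have [t [Ht _]] := Hsim u v Euv.
  exists [:: u; v], [:: t], [:: t]; split => //.
  - split => //=; first by rewrite Euv.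
    + by rewrite inE andbT.
    + by case=> // _; exact: Ht.
  - rewrite /rev /=; split => //=; first by rewrite Esym Euv.
    + by rewrite inE andbT eq_sym.
    + by case=> // _; apply/Lsym.
move=> a b Eab Hbc.
have Hab : a != b by rewrite -Hcomp.
have [p [ts1 [ts2 [Hh Hl Hp1 Hp2]]]] := Hbc a b Hab.
case: p Hh Hl Hp1 Hp2 => [|a0 [|y [|z r]]] //=.
- by move=> -> Hl; move: Hab; rewrite Hl eqxx.
- move=> -> -> [] /andP [] /andP [] _; by rewrite !eqxx.
move=> Ha0 _; subst a0.
move=> [Hpath Huniq Hsz1 Hlab1 Hs1] Hp2.
have Lay : lam a y (nth 0 ts1 0) by apply: (Hlab1 0).
have Lyz : lam y z (nth 0 ts1 1) by apply: (Hlab1 1).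
have Hle1 : nth 0 ts1 0 <= nth 0 ts1 1 by apply: sorted_le Hs1 _ _; rewrite // Hsz1.
move: Huniq; rewrite /= !inE !negb_or => /andP [] /andP [] Hay /andP [] Haz _ /andP [] /andP [] Hyz _ _.
have Eay : E a y by rewrite Hcomp.
have Eyz : E y z by rewrite Hcomp.
set p := [:: a, y, z & r] in Hp2.
have Hszp : size p = (size r).+3 by [].
case Hrev: (rev p) Hp2 => [|x' q'] //.
move=> [_ _ Hsz2 Hlab2 Hs2].
have Hq' : size q' = (size r).+2.
  by move: (congr1 size Hrev); rewrite size_rev Hszp /= => [[]].
have Hn : forall i, i < (size r).+3 -> nth x' (x' :: q') i = nth a p ((size r).+3 - i.+1).
  move=> i Hi; rewrite -Hrev (set_nth_default a); last by rewrite size_rev.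
  by rewrite nth_rev.
have L1 := Hlab2 (size r) ltac:(by rewrite Hq').
have L2 := Hlab2 (size r).+1 ltac:(by rewrite Hq').
have N0 : nth x' (x' :: q') (size r) = z.
  by rewrite Hn; [rewrite (_ : (size r).+3 - (size r).+1 = 2) // | ]; clear; lia.
have N1 : nth x' (x' :: q') (size r).+1 = y.
  by rewrite Hn; [rewrite (_ : (size r).+3 - (size r).+2 = 1) // | ]; clear; lia.
have N2 : nth x' (x' :: q') (size r).+2 = a.
  by rewrite Hn; [rewrite subnn // | ]; clear; lia.
rewrite N0 N1 in L1; rewrite N1 N2 in L2.
have Hle2 : nth 0 ts2 (size r) <= nth 0 ts2 (size r).+1.
  by apply: sorted_le Hs2 _ _; rewrite // Hsz2 Hq'.
have [t1 [_ U1]] := Hsim a y Eay.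
have [t2 [_ U2]] := Hsim y z Eyz.
have e1 : nth 0 ts2 (size r).+1 = nth 0 ts1 0.
  by rewrite (U1 _ (proj1 (Lsym _ _ _) L2)) (U1 _ Lay).
have e2 : nth 0 ts2 (size r) = nth 0 ts1 1.
  by rewrite (U2 _ (proj1 (Lsym _ _ _) L1)) (U2 _ Lyz).
rewrite e1 e2 in Hle2.
have Heq : nth 0 ts1 0 = nth 0 ts1 1 by apply/eqP; rewrite eqn_leq Hle1 Hle2.
apply: (Hprop a y z (nth 0 ts1 0) Eay Eyz Haz Lay).
by rewrite Heq.
Qed.
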